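(* Let $G$ be a two-player stage game with $|V_1^{p,p}|>1$ and $|V_2^{p,p}|>1$. If $G\in\mathcal{G}_{LS}^{m,m}$, then $G\in\mathcal{G}_{LS}^{p,p}$.
   Context: A two-player stage game $G$ has finite nonempty action sets $A_1,A_2$ and payoffs $u_1,u_2:A_1\times A_2\to\mathbb{R}$, extended to mixed strategies by expectation. $G(T)$ is the $T$-round repetition with realized actions observed each round and payoffs the expected sum of stage payoffs; an SPE of $G(T)$ is a strategy profile whose continuation after every history of length $k<T$ is a Nash equilibrium of $G(T-k)$. Regimes: pure-pure ($p,p$): both players restricted to actions (in the stage game and in every round, including deviations); mixed-pure ($m,p$): player 1 may mix, player 2 uses only actions; mixed-mixed ($m,m$): both may mix. For regime $r$, $\mathrm{Nash}^r(G)$ is the set of stage-game profiles available in $r$ from which no player can profitably deviate unilaterally to a strategy available in $r$, and $V_i^r=\{u_i(\sigma):\sigma\in\mathrm{Nash}^r(G)\}$. Locally suboptimal behavior occurs in an SPE $\mu$ of $G(T)$ (regime $r$) if for some history $h$ of length $k<T$, $(\mu_1(h),\mu_2(h))\notin\mathrm{Nash}^r(G)$. $\mathcal{G}_{LS}^r$ is the set of stage games $G$ for which there exist $T\ge1$ and an SPE of $G(T)$ in regime $r$ in which locally suboptimal behavior occurs. *)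

(* Defs.v *)
From HB Require Import structures.
From mathcomp Require Import all_boot all_order all_algebra.
From mathcomp Require Import reals.
Set Implicit Arguments. Unset Strict Implicit. Unset Printing Implicit Defensive.
Import Order.TTheory GRing.Theory Num.Theory.
Local Open Scope ring_scope.

Inductive regime := PP | MP | MM.

Definition mixes1 (r : regime) : bool := if r is PP then false else true.
Definition mixes2 (r : regime) : bool := if r is MM then true else false.

Section Game.
Variables (R : realType) (A1 A2 : finType).
Variables (u1 u2 : A1 -> A2 -> R).

Definition is_dist (A : finType) (p : {ffun A -> R}) : Prop :=
  (forall a, 0 <= p a) /\ \sum_(a : A) p a = 1.

Definition is_pure (A : finType) (p : {ffun A -> R}) : Prop :=
  exists a : A, p = [ffun b => (b == a)%:R].

Definition available (mix : bool) (A : finType) (p : {ffun A -> R}) : Prop :=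
  is_dist p /\ (mix = false -> is_pure p).

Definition ueval (u : A1 -> A2 -> R) (p : {ffun A1 -> R}) (q : {ffun A2 -> R}) : R :=
  \sum_(a : A1) \sum_(b : A2) p a * q b * u a b.

Definition NashStage (r : regime) (p : {ffun A1 -> R}) (q : {ffun A2 -> R}) : Prop :=
  [/\ available (mixes1 r) p, available (mixes2 r) q,
      (forall p', available (mixes1 r) p' -> ueval u1 p' q <= ueval u1 p q) &
      (forall q', available (mixes2 r) q' -> ueval u2 p q' <= ueval u2 p q)].

Definition V1 (r : regime) (x : R) : Prop :=
  exists p q, NashStage r p q /\ x = ueval u1 p q.
Definition V2 (r : regime) (x : R) : Prop :=
  exists p q, NashStage r p q /\ x = ueval u2 p q.

Definition more_than_one (V : R -> Prop) : Prop :=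
  exists x y, V x /\ V y /\ x <> y.

(* histories: sequences of realized action profiles, in chronological order *)
Definition history := seq (A1 * A2).

Definition strat1 := history -> {ffun A1 -> R}.
Definition strat2 := history -> {ffun A2 -> R}.

Definition avail_strat1 (r : regime) (s : strat1) : Prop :=
  forall h, available (mixes1 r) (s h).
Definition avail_strat2 (r : regime) (s : strat2) : Prop :=
  forall h, available (mixes2 r) (s h).

Fixpoint cont (u : A1 -> A2 -> R) (s1 : strat1) (s2 : strat2)
    (h : history) (n : nat) : R :=
  match n with
  | 0 => 0
  | n'.+1 => \sum_(a : A1) \sum_(b : A2)
               s1 h a * s2 h b * (u a b + cont u s1 s2 (rcons h (a, b)) n')
  end.

(* (s1, s2) is an SPE of G(T) in regime r: after every history h of length
   k < T, the continuation is a Nash equilibrium of G(T-k) (deviations to any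
   strategy available in regime r). *)
Definition SPE (r : regime) (T : nat) (s1 : strat1) (s2 : strat2) : Prop :=
  [/\ avail_strat1 r s1, avail_strat2 r s2 &
      forall h : history, (size h < T)%N ->
        (forall t1, avail_strat1 r t1 ->
           cont u1 t1 s2 h (T - size h) <= cont u1 s1 s2 h (T - size h)) /\
        (forall t2, avail_strat2 r t2 ->
           cont u2 s1 t2 h (T - size h) <= cont u2 s1 s2 h (T - size h))].

Definition locally_suboptimal (r : regime) (T : nat) (s1 : strat1) (s2 : strat2) : Prop :=
  exists h : history, (size h < T)%N /\ ~ NashStage r (s1 h) (s2 h).

Definition in_GLS (r : regime) : Prop :=
  exists T : nat, (1 <= T)%N /\
    exists s1 s2, SPE r T s1 s2 /\ locally_suboptimal r T s1 s2.

End Game.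

(* Main.v *)
Require Import Defs.
From HB Require Import structures.
From mathcomp Require Import all_boot all_order all_algebra.
From mathcomp Require Import reals.
From mathcomp Require Import zify ring lra.
Set Implicit Arguments. Unset Strict Implicit. Unset Printing Implicit Defensive.
Import Order.TTheory GRing.Theory Num.Theory.
Local Open Scope ring_scope.

Section Aux.
Variables (R : realType) (A1 A2 : finType).

Definition pt (A : finType) (a : A) : {ffun A -> R} := [ffun b => (b == a)%:R].

Lemma sum_pt (A : finType) (a : A) (F : A -> R) : \sum_x pt a x * F x = F a.
Proof.
rewrite (bigD1 a) //= ffunE eqxx mul1r big1 ?addr0 // => x /negbTE H.
by rewrite ffunE H mul0r.
Qed.

Lemma pt_avail (m : bool) (A : finType) (a : A) : available m (pt a).
Proof.
split; last by move=> _; exists a.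
split; first by move=> x; rewrite ffunE ler0n.
by rewrite -(sum_pt a (fun _ => 1)) ; apply: eq_bigr => x _; rewrite mulr1.
Qed.

Lemma sum2_pt (a : A1) (b : A2) (F : A1 -> A2 -> R) :
  \sum_x \sum_y pt a x * pt b y * F x y = F a b.
Proof.
rewrite -(sum_pt a (fun x => F x b)); apply: eq_bigr => x _.
rewrite -(sum_pt b (F x)) big_distrr /=; apply: eq_bigr => y _.
by rewrite mulrA.
Qed.

Lemma ueval_pt (u : A1 -> A2 -> R) a b : ueval u (pt a) (pt b) = u a b.
Proof. by rewrite /ueval sum2_pt. Qed.

Lemma sum2_const (u : A1 -> A2 -> R) p q c :
  is_dist p -> is_dist q ->
  \sum_x \sum_y p x * q y * (u x y + c) = ueval u p q + c.
Proof.
move=> [_ Hp] [_ Hq]; rewrite /ueval.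
have E : c = \sum_x \sum_y p x * q y * c.
  transitivity (\sum_x p x * c); last first.
    apply: eq_bigr => x _; rewrite -[in LHS](mul1r c) -Hq big_distrl /= big_distrr /=.
    by apply: eq_bigr => y _; rewrite mulrA.
  by rewrite -big_distrl /= Hp mul1r.
rewrite [X in _ = _ + X]E -big_split /=; apply: eq_bigr => x _; rewrite -big_split /=.
by apply: eq_bigr => y _; rewrite mulrDr.
Qed.

Lemma sum2_le (p : {ffun A1 -> R}) (q : {ffun A2 -> R}) (F G : A1 -> A2 -> R) :
  (forall x, 0 <= p x) -> (forall y, 0 <= q y) -> (forall x y, F x y <= G x y) ->
  \sum_x \sum_y p x * q y * F x y <= \sum_x \sum_y p x * q y * G x y.
Proof.
move=> Hp Hq H; apply: ler_sum => x _; apply: ler_sum => y _.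
by apply: ler_wpM2l; [apply: mulr_ge0|].
Qed.

Lemma pure_pt (A : finType) (p : {ffun A -> R}) : available false p -> exists a, p = pt a.
Proof. by move=> [_ H]; apply: H. Qed.

Lemma le_sum_elt (A : finType) (F : A -> R) a : (forall x, 0 <= F x) -> F a <= \sum_x F x.
Proof.
move=> H; rewrite (bigD1 a) //= lerDl; apply: sumr_ge0 => *; exact: H.
Qed.

End Aux.

Section Main.
Variables (R : realType) (A1 A2 : finType) (u1 u2 : A1 -> A2 -> R).
Variables (a0 : A1) (b0 : A2).
Variables (pH1 pL1 pH2 pL2 : {ffun A1 -> R}) (qH1 qL1 qH2 qL2 : {ffun A2 -> R}).
Variable k : nat.
Hypotheses (NH1 : NashStage u1 u2 PP pH1 qH1) (NL1 : NashStage u1 u2 PP pL1 qL1)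
  (NH2 : NashStage u1 u2 PP pH2 qH2) (NL2 : NashStage u1 u2 PP pL2 qL2).

Definition P1 (x : A1 * A2) (t : nat) : {ffun A1 -> R} :=
  if (t <= k)%N then (if x.1 != a0 then pL1 else pH1) else (if x.2 != b0 then pL2 else pH2).
Definition P2 (x : A1 * A2) (t : nat) : {ffun A2 -> R} :=
  if (t <= k)%N then (if x.1 != a0 then qL1 else qH1) else (if x.2 != b0 then qL2 else qH2).
Arguments P1 : simpl never.
Arguments P2 : simpl never.

Definition s1 (h : history A1 A2) : {ffun A1 -> R} :=
  if h is x :: _ then P1 x (size h) else pt R a0.
Definition s2 (h : history A1 A2) : {ffun A2 -> R} :=
  if h is x :: _ then P2 x (size h) else pt R b0.

Lemma NE_P x t : NashStage u1 u2 PP (P1 x t) (P2 x t).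
Proof. by rewrite /P1 /P2; case: ifP => _; case: ifP. Qed.

Lemma dist_P1 x t : is_dist (P1 x t).
Proof. by case: (NE_P x t) => [[]]. Qed.
Lemma dist_P2 x t : is_dist (P2 x t).
Proof. by case: (NE_P x t) => _ [[]]. Qed.

Lemma cont_closed u x h n : cont u s1 s2 (x :: h) n =
  \sum_(i < n) ueval u (P1 x (size h + 1 + i)) (P2 x (size h + 1 + i)).
Proof.
elim: n h => [|n IH] h; first by rewrite big_ord0.
rewrite /=.
under eq_bigr => a _ do under eq_bigr => b _ do rewrite -rcons_cons IH size_rcons.
rewrite sum2_const; [|exact: dist_P1|exact: dist_P2].
rewrite big_ord_recl addn0; congr (ueval _ _ _ + _); try by rewrite addn1.
apply: eq_bigr => i _; rewrite /bump /=.
by have -> : (size h + 1 + (1 + i) = (size h).+1 + 1 + i)%N by lia.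
Qed.

Lemma dev1_ne t1 x h n : avail_strat1 PP t1 ->
  cont u1 t1 s2 (x :: h) n <= cont u1 s1 s2 (x :: h) n.
Proof.
move=> Ht; elim: n h => [|n IH] h; first by [].
rewrite /=.
set c := cont u1 s1 s2 (x :: rcons h x) n.
have Hc : forall y, cont u1 s1 s2 (x :: rcons h y) n = c.
  by move=> y; rewrite /c !cont_closed !size_rcons.
have [[Ht0 _] _] := Ht (x :: h).
have [_ [[Hq0 _] _] Hn _] := NE_P x (size h).+1.
apply: (@le_trans _ _ (\sum_a \sum_b t1 (x :: h) a * P2 x (size h).+1 b * (u1 a b + c))).
  apply: sum2_le => // a b; rewrite lerD2l -(Hc (a, b)); exact: IH.
rewrite [X in _ <= X](_ : _ = \sum_a \sum_b P1 x (size h).+1 a * P2 x (size h).+1 b * (u1 a b + c)); last first.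
  by apply: eq_bigr => a _; apply: eq_bigr => b _; rewrite Hc.
rewrite !sum2_const; [|exact: dist_P1|exact: dist_P2|by case: (Ht (x :: h))|exact: dist_P2].
by rewrite lerD2r; apply: Hn; apply: Ht.
Qed.

Lemma dev2_ne t2 x h n : avail_strat2 PP t2 ->
  cont u2 s1 t2 (x :: h) n <= cont u2 s1 s2 (x :: h) n.
Proof.
move=> Ht; elim: n h => [|n IH] h; first by [].
rewrite /=.
set c := cont u2 s1 s2 (x :: rcons h x) n.
have Hc : forall y, cont u2 s1 s2 (x :: rcons h y) n = c.
  by move=> y; rewrite /c !cont_closed !size_rcons.
have [[Ht0 _] _] := Ht (x :: h).
have [[[Hp0 _] _] _ _ Hn] := NE_P x (size h).+1.
apply: (@le_trans _ _ (\sum_a \sum_b P1 x (size h).+1 a * t2 (x :: h) b * (u2 a b + c))).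
  apply: sum2_le => // a b; rewrite lerD2l -(Hc (a, b)); exact: IH.
rewrite [X in _ <= X](_ : _ = \sum_a \sum_b P1 x (size h).+1 a * P2 x (size h).+1 b * (u2 a b + c)); last first.
  by apply: eq_bigr => a _; apply: eq_bigr => b _; rewrite Hc.
rewrite !sum2_const; [|exact: dist_P1|exact: dist_P2|exact: dist_P1|by case: (Ht (x :: h))].
by rewrite lerD2r; apply: Hn; apply: Ht.
Qed.

Lemma P1_ph1 x t : (t <= k)%N -> P1 x t = if x.1 != a0 then pL1 else pH1.
Proof. by rewrite /P1 => ->. Qed.
Lemma P2_ph1 x t : (t <= k)%N -> P2 x t = if x.1 != a0 then qL1 else qH1.
Proof. by rewrite /P2 => ->. Qed.
Lemma P1_ph2 x t : (k < t)%N -> P1 x t = if x.2 != b0 then pL2 else pH2.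
Proof. by rewrite /P1 ltnNge => /negbTE ->. Qed.
Lemma P2_ph2 x t : (k < t)%N -> P2 x t = if x.2 != b0 then qL2 else qH2.
Proof. by rewrite /P2 ltnNge => /negbTE ->. Qed.

Lemma split_closed u x :
  cont u s1 s2 [:: x] (k + k) =
  ueval u (if x.1 != a0 then pL1 else pH1) (if x.1 != a0 then qL1 else qH1) *+ k +
  ueval u (if x.2 != b0 then pL2 else pH2) (if x.2 != b0 then qL2 else qH2) *+ k.
Proof.
rewrite cont_closed big_split_ord /=.
congr (_ + _).
  rewrite -[in RHS](card_ord k) -sumr_const; apply: eq_bigr => i _.
  have Hi : (0 + 1 + i <= k)%N by rewrite add0n add1n ltn_ord.
  by rewrite P1_ph1 // P2_ph1.
rewrite -[in RHS](card_ord k) -sumr_const; apply: eq_bigr => i _.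
have Hi : (k < 0 + 1 + (k + i))%N by lia.
by rewrite P1_ph2 // P2_ph2.
Qed.

Lemma root1 t1 : avail_strat1 PP t1 ->
  (forall a, u1 a b0 - u1 a0 b0 <= (ueval u1 pH1 qH1 - ueval u1 pL1 qL1) *+ k) ->
  cont u1 t1 s2 [::] (k + k).+1 <= cont u1 s1 s2 [::] (k + k).+1.
Proof.
move=> Ht Hk; have [a Ha] := pure_pt (Ht [::]).
rewrite /= Ha !sum2_pt.
apply: (@le_trans _ _ (u1 a b0 + cont u1 s1 s2 [:: (a, b0)] (k + k))).
  by rewrite lerD2l; apply: dev1_ne.
rewrite !split_closed /= eqxx /=.
have [->|Hne] := eqVneq a a0; first by rewrite eqxx.
rewrite ?eqxx /=.
have := Hk a; rewrite mulrnBl.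
move: (u1 a b0) (u1 a0 b0) (ueval u1 pL1 qL1 *+ k) (ueval u1 pH1 qH1 *+ k) (ueval u1 pH2 qH2 *+ k) => x y l hh z; lra.
Qed.

Lemma root2 t2 : avail_strat2 PP t2 ->
  (forall b, u2 a0 b - u2 a0 b0 <= (ueval u2 pH2 qH2 - ueval u2 pL2 qL2) *+ k) ->
  cont u2 s1 t2 [::] (k + k).+1 <= cont u2 s1 s2 [::] (k + k).+1.
Proof.
move=> Ht Hk; have [b Hb] := pure_pt (Ht [::]).
rewrite /= Hb !sum2_pt.
apply: (@le_trans _ _ (u2 a0 b + cont u2 s1 s2 [:: (a0, b)] (k + k))).
  by rewrite lerD2l; apply: dev2_ne.
rewrite !split_closed /= eqxx /=.
have [->|Hne] := eqVneq b b0; first by rewrite eqxx.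
rewrite ?eqxx /=.
have := Hk b; rewrite mulrnBl.
move: (u2 a0 b) (u2 a0 b0) (ueval u2 pL2 qL2 *+ k) (ueval u2 pH2 qH2 *+ k) (ueval u2 pH1 qH1 *+ k) => x y l hh z; lra.
Qed.

End Main.

From Stdlib Require Import Classical.

Section Final.
Variables (R : realType) (A1 A2 : finType) (u1 u2 : A1 -> A2 -> R).

Lemma ueval_c1 (u : A1 -> A2 -> R) (f : A2 -> R) p q :
  (forall a b, u a b = f b) -> is_dist p -> ueval u p q = \sum_b q b * f b.
Proof.
move=> Hu [_ Hp]; rewrite /ueval.
transitivity (\sum_a p a * \sum_b q b * f b); last by rewrite -big_distrl /= Hp mul1r.
apply: eq_bigr => a _; rewrite big_distrr; apply: eq_bigr => b _.
by rewrite /= Hu mulrA.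
Qed.

Lemma ueval_c2 (u : A1 -> A2 -> R) (g : A1 -> R) p q :
  (forall a b, u a b = g a) -> is_dist q -> ueval u p q = \sum_a p a * g a.
Proof.
move=> Hu [_ Hq]; rewrite /ueval; apply: eq_bigr => a _.
rewrite -[in RHS](mul1r (g a)) -Hq big_distrl big_distrr /=; apply: eq_bigr => b _.
by rewrite Hu mulrA.
Qed.

Lemma nonNash (a1 : A1) (a2 : A2) : in_GLS u1 u2 MM ->
  exists a0 b0, ~ NashStage u1 u2 PP (pt R a0) (pt R b0).
Proof.
move=> [T [_ [s1 [s2 [[Hs1 Hs2 _] [h [_ Hn]]]]]]].
apply: NNPP => Hno.
have Hall : forall a b, NashStage u1 u2 PP (pt R a) (pt R b).
  move=> a b; apply: NNPP => H; apply: Hno; by exists a, b.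
have E1 : forall a b, u1 a b = u1 a1 b.
  move=> a b; apply/le_anti/andP; split.
    have [_ _ H _] := Hall a1 b; have := H (pt R a) (pt_avail _ _ _); by rewrite !ueval_pt.
  have [_ _ H _] := Hall a b; have := H (pt R a1) (pt_avail _ _ _); by rewrite !ueval_pt.
have E2 : forall a b, u2 a b = u2 a a2.
  move=> a b; apply/le_anti/andP; split.
    have [_ _ _ H] := Hall a a2; have := H (pt R b) (pt_avail _ _ _); by rewrite !ueval_pt.
  have [_ _ _ H] := Hall a b; have := H (pt R a2) (pt_avail _ _ _); by rewrite !ueval_pt.
apply: Hn; split; [exact: Hs1|exact: Hs2| |].
  move=> p' [Hp' _]; have [Hp _] := Hs1 h.
  by rewrite (ueval_c1 _ E1 Hp') (ueval_c1 _ E1 Hp).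
move=> q' [Hq' _]; have [Hq _] := Hs2 h.
by rewrite (ueval_c2 _ E2 Hq') (ueval_c2 _ E2 Hq).
Qed.

Lemma order1 : more_than_one (V1 u1 u2 PP) -> exists pH qH pL qL,
  [/\ NashStage u1 u2 PP pH qH, NashStage u1 u2 PP pL qL &
      ueval u1 pL qL < ueval u1 pH qH].
Proof.
move=> [x [y [[p [q [Hpq ->]]] [[p' [q' [Hpq' ->]]] Hne]]]].
have /eqP := Hne; rewrite neq_lt => /orP [H|H].
  by exists p', q', p, q.
by exists p, q, p', q'.
Qed.

Lemma order2 : more_than_one (V2 u1 u2 PP) -> exists pH qH pL qL,
  [/\ NashStage u1 u2 PP pH qH, NashStage u1 u2 PP pL qL &
      ueval u2 pL qL < ueval u2 pH qH].
Proof.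
move=> [x [y [[p [q [Hpq ->]]] [[p' [q' [Hpq' ->]]] Hne]]]].
have /eqP := Hne; rewrite neq_lt => /orP [H|H].
  by exists p', q', p, q.
by exists p, q, p', q'.
Qed.

End Final.

Theorem mainTheorem17 (R : realType) (A1 A2 : finType)
    (u1 u2 : A1 -> A2 -> R) (a1 : A1) (a2 : A2) :
  more_than_one (V1 u1 u2 PP) ->
  more_than_one (V2 u1 u2 PP) ->
  in_GLS u1 u2 MM ->
  in_GLS u1 u2 PP.
Proof.
move=> HV1 HV2 HG.
have [a0 [b0 Hnn]] := nonNash a1 a2 HG.
have [pH1 [qH1 [pL1 [qL1 [NH1 NL1 Hd1]]]]] := order1 HV1.
have [pH2 [qH2 [pL2 [qL2 [NH2 NL2 Hd2]]]]] := order2 HV2.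
set d1 := ueval u1 pH1 qH1 - ueval u1 pL1 qL1.
set d2 := ueval u2 pH2 qH2 - ueval u2 pL2 qL2.
have d1p : 0 < d1 by rewrite subr_gt0.
have d2p : 0 < d2 by rewrite subr_gt0.
set C1 := \sum_a `|u1 a b0 - u1 a0 b0|.
set C2 := \sum_b `|u2 a0 b - u2 a0 b0|.
have C10 : 0 <= C1 by apply: sumr_ge0.
have C20 : 0 <= C2 by apply: sumr_ge0.
set C := C1 + C2.
have C0 : 0 <= C by rewrite addr_ge0.
have Hb := @archi_boundP R (C / d1 + C / d2) (addr_ge0 (divr_ge0 C0 (ltW d1p)) (divr_ge0 C0 (ltW d2p))).
set k := Num.Def.archi_bound _ in Hb.
have Hk1 : forall a, u1 a b0 - u1 a0 b0 <= d1 *+ k.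
  move=> a; rewrite -mulr_natl.
  apply: le_trans (ler_norm _) _.
  apply: (@le_trans _ _ C).
    apply: (@le_trans _ _ C1); last by rewrite lerDl.
    by rewrite /C1; exact: (@le_sum_elt _ _ (fun x => `|u1 x b0 - u1 a0 b0|) a (fun x => normr_ge0 _)).
  rewrite -ler_pdivrMr //; apply: le_trans (ltW Hb); by rewrite lerDl divr_ge0 // ltW.
have Hk2 : forall b, u2 a0 b - u2 a0 b0 <= d2 *+ k.
  move=> b; rewrite -mulr_natl.
  apply: le_trans (ler_norm _) _.
  apply: (@le_trans _ _ C).
    apply: (@le_trans _ _ C2); last by rewrite lerDr.
    by rewrite /C2; exact: (@le_sum_elt _ _ (fun x => `|u2 a0 x - u2 a0 b0|) b (fun x => normr_ge0 _)).
  rewrite -ler_pdivrMr //; apply: le_trans (ltW Hb); by rewrite lerDr divr_ge0 // ltW.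
exists (k + k).+1; split => //.
exists (s1 a0 b0 pH1 pL1 pH2 pL2 k), (s2 a0 b0 qH1 qL1 qH2 qL2 k); split.
- split.
  + by case=> [|x h] /=; [apply: pt_avail| case: (NE_P a0 b0 k NH1 NL1 NH2 NL2 x (size h).+1)].
  + by case=> [|x h] /=; [apply: pt_avail| case: (NE_P a0 b0 k NH1 NL1 NH2 NL2 x (size h).+1)].
  + case=> [|x h] Hs; split.
    * by move=> t1 Ht; rewrite subn0; apply: (root1 NH1 NL1 NH2 NL2).
    * by move=> t2 Ht; rewrite subn0; apply: (root2 NH1 NL1 NH2 NL2).
    * by move=> t1 Ht; apply: (dev1_ne a0 b0 k NH1 NL1 NH2 NL2).
    * by move=> t2 Ht; apply: (dev2_ne a0 b0 k NH1 NL1 NH2 NL2).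
- by exists [::].
Qed.
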